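(* Let $\Omega\subset\mathbb{R}^{n+1}$ be a compact convex body with $C^1$ boundary, fix $\Theta\in[\frac12,1)$ and let $r_\Theta>0$ satisfy $\omega_\Omega(r_\Theta)<\sqrt{2-2\Theta}$. Fix $X_0\in\partial\Omega$, choose orthonormal coordinates with $\mathcal{N}_\Omega(X_0)=e_{n+1}$, let $x_0\in\mathbb{R}^n$ be the first $n$ coordinates of $X_0$, and let $\beta_{X_0}:\Omega_{X_0}\to\mathbb{R}$ be the concave function whose graph is $\partial\Omega^+(X_0)$. Then for every $x_1\in B^n_{r_\Theta/4}(x_0)$ and every $x_2\in\Omega_{X_0}$, $$|\beta_{X_0}(x_1)-\beta_{X_0}(x_2)|\le\frac{4\,\mathrm{diam}(\Omega)}{r_\Theta}|x_1-x_2|.$$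
   Context: $\mathcal{N}_\Omega(X)$ is the outward unit normal at $X\in\partial\Omega$; $\omega_\Omega(r):=\sup\{|\mathcal{N}_\Omega(X_1)-\mathcal{N}_\Omega(X_2)|: X_1,X_2\in\partial\Omega,|X_1-X_2|<r\}$. $\partial\Omega^+(X_0):=\{X\in\partial\Omega\mid\langle\mathcal{N}_\Omega(X),\mathcal{N}_\Omega(X_0)\rangle>0\}$. In coordinates where $\mathcal{N}_\Omega(X_0)=e_{n+1}$, the orthogonal projection of $\partial\Omega^+(X_0)$ to $\mathbb{R}^n$ (the first $n$ coordinates) is an open bounded convex set $\Omega_{X_0}$, and $\partial\Omega^+(X_0)=\{(x,\beta_{X_0}(x)):x\in\Omega_{X_0}\}$ for a $C^1$ concave function $\beta_{X_0}$. *)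

(* Defs.v *)
(* Points of R^{n+1} are pairs (x, t) : 'rV[R]_n * R,
   x = first n coordinates, t = (n+1)-st coordinate; Euclidean structure explicit. *)
From HB Require Import structures.
From mathcomp Require Import all_boot all_order all_algebra.
From mathcomp Require Import all_classical all_reals all_analysis.
Set Implicit Arguments. Unset Strict Implicit. Unset Printing Implicit Defensive.
Import Order.TTheory GRing.Theory Num.Theory.
Import numFieldNormedType.Exports.
Local Open Scope classical_set_scope.
Local Open Scope ring_scope.

Section Defs.
Variables (R : realType) (n : nat).

Local Notation pt := ('rV[R]_n * R)%type.

Definition dotn (x y : 'rV[R]_n) : R := \sum_(i < n) x ord0 i * y ord0 i.
Definition enorm (x : 'rV[R]_n) : R := Num.sqrt (dotn x x).

Definition padd (X Y : pt) : pt := (X.1 + Y.1, X.2 + Y.2).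
Definition psub (X Y : pt) : pt := (X.1 - Y.1, X.2 - Y.2).
Definition pscale (a : R) (X : pt) : pt := (a *: X.1, a * X.2).
Definition pdot (X Y : pt) : R := dotn X.1 Y.1 + X.2 * Y.2.
Definition pnorm (X : pt) : R := Num.sqrt (pdot X X).

Definition e_last : pt := (0, 1).

Definition convex_set (O : set pt) : Prop :=
  forall X Y a, O X -> O Y -> 0 <= a <= 1 ->
    O (padd (pscale a X) (pscale (1 - a) Y)).

Definition convex_body (O : set pt) : Prop :=
  [/\ compact O, convex_set O & interior O !=set0].

Definition bdry (O : set pt) : set pt := closure O `\` interior O.

Definition diam (O : set pt) : R :=
  sup [set d | exists X Y, [/\ O X, O Y & d = pnorm (psub X Y)]].

Definition outward_unit_normal (O : set pt) (X N : pt) : Prop :=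
  pnorm N = 1 /\ forall Y, O Y -> pdot (psub Y X) N <= 0.

(* N is THE outward unit normal field of a convex body O with C^1 boundary:
   at every boundary point the outward unit normal exists, is unique and it
   depends continuously on the point. *)
Definition C1_normal_field (O : set pt) (N : pt -> pt) : Prop :=
  [/\ forall X, bdry O X -> outward_unit_normal O X (N X),
      forall X M, bdry O X -> outward_unit_normal O X M -> M = N X
    & {within bdry O, continuous N}].

Definition omega (O : set pt) (N : pt -> pt) (r : R) : R :=
  sup [set d | exists X1 X2, [/\ bdry O X1, bdry O X2,
         pnorm (psub X1 X2) < r & d = pnorm (psub (N X1) (N X2))]].

Definition bdry_plus (O : set pt) (N : pt -> pt) (X0 : pt) : set pt :=
  [set X | bdry O X /\ pdot (N X) (N X0) > 0].

Definition proj_plus (O : set pt) (N : pt -> pt) (X0 : pt) : set 'rV[R]_n :=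
  [set x | exists t, bdry_plus O N X0 (x, t)].

End Defs.

(* Main.v *)
Require Import Defs.
From HB Require Import structures.
From mathcomp Require Import all_boot all_order all_algebra.
From mathcomp Require Import all_classical all_reals all_analysis.
From mathcomp Require Import ring lra.
Import Order.TTheory GRing.Theory Num.Theory.
Import numFieldNormedType.Exports.
Local Open Scope classical_set_scope.
Local Open Scope ring_scope.

Section Alg.
Context {R : realType} {n : nat}.
Local Notation pt := ('rV[R]_n * R)%type.

Lemma dotnC (x y : 'rV[R]_n) : dotn x y = dotn y x.
Proof. by apply: eq_bigr => i _; rewrite mulrC. Qed.

Lemma dotnDl (x y z : 'rV[R]_n) : dotn (x + y) z = dotn x z + dotn y z.
Proof. by rewrite /dotn -big_split; apply: eq_bigr => i _; rewrite !mxE mulrDl. Qed.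

Lemma dotnZl a (x z : 'rV[R]_n) : dotn (a *: x) z = a * dotn x z.
Proof. by rewrite /dotn mulr_sumr; apply: eq_bigr => i _; rewrite !mxE mulrA. Qed.

Lemma dotnNl (x z : 'rV[R]_n) : dotn (- x) z = - dotn x z.
Proof. by rewrite -scaleN1r dotnZl mulN1r. Qed.

Lemma dotnBl (x y z : 'rV[R]_n) : dotn (x - y) z = dotn x z - dotn y z.
Proof. by rewrite dotnDl dotnNl. Qed.

Lemma dotnDr (x y z : 'rV[R]_n) : dotn z (x + y) = dotn z x + dotn z y.
Proof. by rewrite !(dotnC z) dotnDl. Qed.
Lemma dotnZr a (x z : 'rV[R]_n) : dotn z (a *: x) = a * dotn z x.
Proof. by rewrite !(dotnC z) dotnZl. Qed.
Lemma dotnBr (x y z : 'rV[R]_n) : dotn z (x - y) = dotn z x - dotn z y.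
Proof. by rewrite !(dotnC z) dotnBl. Qed.

Lemma dotn0r (x : 'rV[R]_n) : dotn x 0 = 0.
Proof. by rewrite /dotn big1 // => i _; rewrite mxE mulr0. Qed.
Lemma dotn0l (x : 'rV[R]_n) : dotn 0 x = 0.
Proof. by rewrite dotnC dotn0r. Qed.

Lemma dotn_ge0 (x : 'rV[R]_n) : 0 <= dotn x x.
Proof. by rewrite /dotn sumr_ge0 // => i _; rewrite -expr2 sqr_ge0. Qed.

Lemma quad_disc (a b c : R) : 0 <= a -> 0 <= c ->
  (forall l, 0 <= a - 2 * l * b + l ^+ 2 * c) -> b ^+ 2 <= a * c.
Proof.
move=> a0 c0 H.
have [c0'|cpos] := eqVneq c 0.
  subst c. have [b0|bn0] := eqVneq b 0; first by subst b; rewrite expr0n /= mulr0.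
  have := H ((a + 1) / (2 * b)). rewrite mulr0 addr0.
  have -> : 2 * ((a + 1) / (2 * b)) * b = a + 1.
    by field; rewrite bn0 /=.
  lra.
have cp : 0 < c by rewrite lt_neqAle eq_sym cpos.
have := H (b / c).
have -> : a - 2 * (b / c) * b + (b / c) ^+ 2 * c = a - b ^+ 2 / c.
  by field; rewrite gt_eqF.
rewrite subr_ge0 ler_pdivrMr //.
Qed.

Lemma CS (x y : 'rV[R]_n) : dotn x y ^+ 2 <= dotn x x * dotn y y.
Proof.
apply: quad_disc; try exact: dotn_ge0.
move=> l; have := dotn_ge0 (x - l *: y).
rewrite !dotnBl !dotnBr !dotnZl !dotnZr (dotnC y x). lra.
Qed.

Lemma dotn_par (x y : 'rV[R]_n) :
  dotn (x + y) (x + y) <= 2 * dotn x x + 2 * dotn y y.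
Proof.
have := dotn_ge0 (x - y).
rewrite dotnBl !dotnBr !dotnDl !dotnDr (dotnC y x). lra.
Qed.

Lemma dotnNN (x y : 'rV[R]_n) : dotn (- x) (- y) = dotn x y.
Proof. by rewrite dotnNl (dotnC x) dotnNl dotnC opprK. Qed.

Lemma sqrt_lt (p r : R) : 0 < r -> Num.sqrt p < r -> p < r ^+ 2.
Proof.
move=> r0 h; have [p0|p0] := leP p 0.
  by apply: le_lt_trans p0 _; rewrite exprn_gt0.
by rewrite -(sqr_sqrtr (ltW p0)) ltr_pXn2r // ?nnegrE ?sqrtr_ge0 // ltW.
Qed.

Lemma lt_sqrt (p r : R) : 0 < r -> p < r ^+ 2 -> Num.sqrt p < r.
Proof.
move=> r0 h; rewrite -(ger0_norm (ltW r0)) -sqrtr_sqr ltr_sqrt //.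
by rewrite exprn_gt0.
Qed.

Lemma le_sqrt (p r : R) : 0 <= r -> r ^+ 2 <= p -> r <= Num.sqrt p.
Proof.
move=> r0 h; rewrite -(ger0_norm r0) -sqrtr_sqr; exact: ler_wsqrtr.
Qed.

Lemma le_sqrt2 (p r : R) : 0 <= r -> p <= r ^+ 2 -> Num.sqrt p <= r.
Proof.
move=> r0 h; rewrite -(ger0_norm r0) -sqrtr_sqr; exact: ler_wsqrtr.
Qed.

Lemma sqrt_le (p r : R) : 0 <= r -> 0 <= p -> Num.sqrt p <= r -> p <= r ^+ 2.
Proof.
move=> r0 p0 h; rewrite -(sqr_sqrtr p0) ler_pXn2r // ?nnegrE ?sqrtr_ge0 //.
Qed.

Lemma closedO (O : set pt) : compact O -> closed O.
Proof. move=> cO; apply: compact_closed => //; exact: norm_hausdorff. Qed.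

Lemma interior_up (O : set pt) (z : 'rV[R]_n) (t : R) :
  interior O (z, t) -> exists2 e, 0 < e & forall s, `|s - t| < e -> O (z, s).
Proof.
move=> /nbhs_ballP[e e0 He]; exists e => // s hs; apply: He.
split => /=; first exact: ballxx.
by rewrite /ball /= distrC.
Qed.

Lemma closure_vert (O : set pt) (z : 'rV[R]_n) (A : set R) (t : R) :
  (forall s, A s -> O (z, s)) -> closure A t -> closure O (z, t).
Proof.
move=> AO cAt W /nbhs_ballP[e e0 He].
have : nbhs t (ball t e) by exact: nbhsx_ballx.
move=> /cAt [s [As Bs]]; exists (z, s); split; first exact: AO.
apply: He; split => //=; exact: ballxx.
Qed.

Lemma closure_inf (A : set R) : A !=set0 -> has_lbound A -> closure A (inf A).
Proof.
move=> A0 lA W /nbhs_ballP[e e0 He].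
have [a Aa ha] := inf_adherent e0 (conj A0 lA).
exists a; split => //; apply: He.
have := ge_inf lA Aa. rewrite /ball /= ltr_norml. lra.
Qed.

Lemma entry_le (v : 'rV[R]_n) i : `|v ord0 i| <= `|v|.
Proof.
have -> : `|v| = mx_norm v by [].
rewrite mx_normrE.
exact: (le_bigmax _ _ (ord0, i)).
Qed.

Lemma norm_fst (V : pt) : `|V.1| <= `|V|.
Proof. by rewrite prod_normE /= le_max lexx. Qed.
Lemma norm_snd (V : pt) : `|V.2| <= `|V|.
Proof. by rewrite prod_normE /= le_max lexx orbT. Qed.

Lemma pdot_le (V : pt) : pdot V V <= n.+1%:R * `|V| ^+ 2.
Proof.
rewrite /pdot /dotn.
have h1 : \sum_(i < n) V.1 ord0 i * V.1 ord0 i <= \sum_(i < n) `|V| ^+ 2.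
  apply: ler_sum => i _; rewrite -expr2 -real_normK ?num_real //.
  rewrite ler_pXn2r // ?nnegrE //; apply: le_trans (entry_le _ _) (norm_fst _).
rewrite sumr_const card_ord in h1.
have h2 : V.2 * V.2 <= `|V| ^+ 2.
  rewrite -expr2 -real_normK ?num_real // ler_pXn2r // ?nnegrE //; exact: norm_snd.
rewrite -natr1 mulrDl mul1r mulr_natl; exact: lerD.
Qed.

Lemma bounded_pdot (O : set pt) : compact O ->
  exists K, 0 <= K /\ forall X Y, O X -> O Y -> pdot (psub X Y) (psub X Y) <= K.
Proof.
move=> /compact_bounded [M [_ HM]].
have HM1 := HM (`|M| + 1) (lt_le_trans (ltr_pwDr ltr01 (ler_norm M)) (lexx _)).
set M' := `|M| + 1.
exists (n.+1%:R * (2 * M') ^+ 2); split.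
  by rewrite mulr_ge0 // sqr_ge0.
move=> X Y OX OY.
have hX := HM1 X OX; have hY := HM1 Y OY.
have -> : psub X Y = X - Y by [].
apply: le_trans (pdot_le _) _.
rewrite ler_pM2l // ler_pXn2r // ?nnegrE //.
- apply: le_trans (ler_normB _ _) _; rewrite /= in hX hY.
  rewrite /M'. lra.
- rewrite /M'. have := normr_ge0 M. lra.
Qed.

End Alg.

Section Geo.
Variables (R : realType) (n : nat).
Local Notation pt := ('rV[R]_n * R)%type.
Variables (O : set pt) (N : pt -> pt) (Th r : R) (X0 : pt).
Hypothesis cO : compact O.
Hypothesis convO : Defs.convex_set O.
Hypothesis nf1 : forall X, bdry O X -> outward_unit_normal O X (N X).
Hypothesis Th2 : 1 / 2 <= Th.
Hypothesis Th1 : Th < 1.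
Hypothesis r0 : 0 < r.
Hypothesis Hom : omega O N r < Num.sqrt (2 - 2 * Th).
Hypothesis HX0 : bdry O X0.
Hypothesis NX0 : N X0 = e_last R n.

Lemma bdryO {X} : bdry O X -> O X.
Proof. by case=> cX _; rewrite ((closure_id O).1 (closedO _ cO)). Qed.

Lemma hyp {X Y} : bdry O X -> O Y ->
  dotn (Y.1 - X.1) (N X).1 + (Y.2 - X.2) * (N X).2 <= 0.
Proof. by move=> bX OY; have [_ /(_ Y OY)] := nf1 _ bX. Qed.

Lemma unitN {X} : bdry O X -> dotn (N X).1 (N X).1 + (N X).2 ^+ 2 = 1.
Proof.
move=> bX; have [h _] := nf1 _ bX; move: h; rewrite /pnorm => h.
have p0 : 0 <= pdot (N X) (N X) by rewrite /pdot addr_ge0 ?dotn_ge0 // -expr2 sqr_ge0.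
by move: (sqr_sqrtr p0); rewrite h expr1n /pdot expr2 => <-.
Qed.

Lemma top Y : O Y -> Y.2 <= X0.2.
Proof.
move=> OY; have := hyp HX0 OY; rewrite NX0 /e_last /= dotn0r add0r mulr1.
by rewrite subr_le0.
Qed.

Lemma omega_has_sup {X1 X2} : bdry O X1 -> bdry O X2 ->
  pnorm (psub X1 X2) < r ->
  pnorm (psub (N X1) (N X2)) <= omega O N r.
Proof.
move=> b1 b2 lt; apply: sup_upper_bound; last by exists X1, X2.
split; first by exists (pnorm (psub (N X1) (N X2))), X1, X2.
exists 2 => d [Y1 [Y2 [c1 c2 _ ->]]].
have u1 := unitN c1; have u2 := unitN c2.
rewrite /pnorm; apply: le_sqrt2 => //.
have := dotn_ge0 ((N Y1).1 + (N Y2).1).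
rewrite /pdot /= dotnBl !dotnBr !dotnDl !dotnDr (dotnC (N Y2).1).
have := sqr_ge0 ((N Y1).2 + (N Y2).2).
rewrite expr2 in u1 u2 *. nra.
Qed.

Lemma nu_good {Q} : bdry O Q -> pdot (psub Q X0) (psub Q X0) < r ^+ 2 -> Th < (N Q).2.
Proof.
move=> bQ lt.
have h1 : pnorm (psub Q X0) < r by exact: lt_sqrt.
have h2 := omega_has_sup bQ HX0 h1.
have h3 := le_lt_trans h2 Hom.
have h4 : pdot (psub (N Q) (N X0)) (psub (N Q) (N X0)) < 2 - 2 * Th.
  rewrite -(@ltr_sqrt R); [exact: h3 | ].
  have := Th1. lra.
have u := unitN bQ.
move: h4; rewrite NX0 /e_last /pdot /= subr0. nra.
Qed.

Lemma slope {Q Y} : bdry O Q -> Th < (N Q).2 -> O Y -> Q.2 <= Y.2 ->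
  (Y.2 - Q.2) ^+ 2 <= 3 * dotn (Y.1 - Q.1) (Y.1 - Q.1).
Proof.
move=> bQ nu OY le; have T2 := Th2.
have hp := hyp bQ OY.
have u := unitN bQ.
have cs := CS (Y.1 - Q.1) (N Q).1.
set w := dotn (Y.1 - Q.1) (Y.1 - Q.1) in cs *.
set p := dotn (Y.1 - Q.1) (N Q).1 in hp cs.
set h := Y.2 - Q.2 in hp *.
set v := (N Q).2 in nu hp u.
set m := dotn (N Q).1 (N Q).1 in u cs.
have w0 : 0 <= w by exact: dotn_ge0.
have h0 : 0 <= h by rewrite /h subr_ge0.
have hv : 0 <= h * v <= - p by apply/andP; split; [rewrite mulr_ge0 //; lra | lra].
have e1 : (h * v) ^+ 2 <= p ^+ 2.
  case/andP: hv => a b. rewrite -[p ^+ 2]sqrrN ler_pXn2r ?nnegrE //; lra.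
have e2 : (h * v) ^+ 2 <= w * (1 - v ^+ 2).
  apply: le_trans e1 _; rewrite -u addrK; exact: cs.
have v2 : 1 < 4 * v ^+ 2 by nra.
have e3 : (3 * w - h ^+ 2) * v ^+ 2 >= 0 by nra.
have vp : 0 < v ^+ 2 by nra.
have := e3; rewrite pmulr_lge0 //; lra.
Qed.


Definition Tz (z : 'rV[R]_n) : R := sup [set t | O (z, t)].

Lemma Tprops {z t} : O (z, t) ->
  [/\ O (z, Tz z), bdry O (z, Tz z) & forall s, O (z, s) -> s <= Tz z].
Proof.
move=> Ozt.
have ne : [set t | O (z, t)] !=set0 by exists t.
have ub : has_ubound [set t | O (z, t)] by exists X0.2 => s Os; exact: (top _ Os).
have hs : has_sup [set t | O (z, t)] by split.
have le : forall s, O (z, s) -> s <= Tz z by move=> s Os; exact: sup_upper_bound.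
have cl : closure O (z, Tz z).
  exact: (@closure_vert _ _ O z ([set t | O (z, t)]) _ (fun s h => h) (closure_sup ne ub)).
have OT : O (z, Tz z) by rewrite ((closure_id O).1 (closedO _ cO)).
split => //; split => // /interior_up [e e0 He].
have hlt : `|Tz z + e / 2 - Tz z| < e.
  have -> : Tz z + e / 2 - Tz z = e / 2 by ring.
  rewrite ger0_norm; lra.
have := le _ (He _ hlt). lra.
Qed.


Definition xs (x : 'rV[R]_n) (s : R) := X0.1 + s *: (x - X0.1).

Lemma seg_in {x t s} : O (x, t) -> 0 <= s <= 1 -> O (xs x s, X0.2 + s * (t - X0.2)).
Proof.
move=> Oxt hs.
have := convO _ _ _ Oxt (bdryO HX0) hs.
rewrite /padd /pscale /=.
have -> : s *: x + (1 - s) *: X0.1 = xs x s.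
  by apply/rowP => i; rewrite /xs !mxE; ring.
by have -> : s * t + (1 - s) * X0.2 = X0.2 + s * (t - X0.2) by ring.
Qed.

Lemma interp {x t s s'} : O (x, t) -> 0 <= s -> s <= s' -> s' <= 1 -> s < 1 ->
  (s' - s) / (1 - s) * t + (1 - (s' - s) / (1 - s)) * Tz (xs x s) <= Tz (xs x s').
Proof.
move=> Oxt s0 ss' s'1 s1.
have hs : 0 <= s <= 1 by apply/andP; split; lra.
have hs' : 0 <= s' <= 1 by apply/andP; split; lra.
have [OQ _ _] := Tprops (seg_in Oxt hs).
have [_ _ le'] := Tprops (seg_in Oxt hs').
set l := (s' - s) / (1 - s).
have s1' : 1 - s != 0 by rewrite subr_eq0 gt_eqF.
have l0 : 0 <= l by rewrite /l divr_ge0 //; lra.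
have l1 : l <= 1 by rewrite /l ler_pdivrMr ?mul1r; lra.
have hl : 0 <= l <= 1 by apply/andP; split.
have := convO _ _ _ Oxt OQ hl.
rewrite /padd /pscale /=.
have -> : l *: x + (1 - l) *: xs x s = xs x s'.
  apply/rowP => i; rewrite /xs /l !mxE; field => //.
move=> h; exact: le' h.
Qed.


Lemma stepB x t : bdry O (x, t) -> 0 < (N (x, t)).2 ->
  4 * dotn (x - X0.1) (x - X0.1) < r ^+ 2 -> Th < (N (x, t)).2.
Proof.
move=> bX nuX ha.
have T1 := Th1; have T2 := Th2; have r0' := r0.
have OX := bdryO bX.
have a0 : 0 <= dotn (x - X0.1) (x - X0.1) := dotn_ge0 _.
set a := dotn (x - X0.1) (x - X0.1) in a0 ha.
pose T s := Tz (xs x s).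
pose h s := X0.2 - T s.
have Tp : forall s, 0 <= s <= 1 ->
    [/\ O (xs x s, T s), bdry O (xs x s, T s)
      & forall v, O (xs x s, v) -> v <= T s].
  by move=> s hs; exact: (Tprops (seg_in OX hs)).
have Tlow : forall s, 0 <= s <= 1 -> X0.2 + s * (t - X0.2) <= T s.
  by move=> s hs; have [_ _ le] := Tp s hs; apply: le; exact: seg_in.
have Tup : forall s, 0 <= s <= 1 -> T s <= X0.2.
  by move=> s hs; have [OQ _ _] := Tp s hs; exact: (top _ OQ).
have Ht : t <= X0.2 := top _ OX.
have xsE : forall s, xs x s - X0.1 = s *: (x - X0.1).
  by move=> s; rewrite /xs addrC addKr.
pose good s := h s ^+ 2 <= 3 * (s ^+ 2 * a).
have G : forall s, 0 <= s <= 1 -> h s ^+ 2 < r ^+ 2 - a -> good s.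
  move=> s hs lt; have [OQ bQ _] := Tp s hs.
  have s2 : s ^+ 2 <= 1.
    by case/andP: hs => ha1 hb; rewrite expr2; nra.
  have dq : pdot (psub (xs x s, T s) X0) (psub (xs x s, T s) X0)
      = s ^+ 2 * a + h s ^+ 2.
    rewrite /pdot /psub /= xsE dotnZl dotnZr /h /a; ring.
  have nu : Th < (N (xs x s, T s)).2.
    apply: (nu_good bQ); rewrite dq; nra.
  have := slope bQ nu (bdryO HX0) (Tup s hs).
  rewrite /good /h /=.
  have -> : X0.1 - xs x s = - (s *: (x - X0.1)) by rewrite -xsE opprB.
  by rewrite dotnNN dotnZl dotnZr -/a [s ^+ 2]expr2 -mulrA.
have h0 : forall s, 0 <= s <= 1 -> 0 <= h s.
  by move=> s hs; rewrite /h subr_ge0; exact: Tup.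
have good0 : good 0.
  have hs : 0 <= (0:R) <= 1 by apply/andP; split; lra.
  have := Tlow 0 hs; have := Tup 0 hs; rewrite /good /h mul0r addr0.
  move=> u v; have -> : X0.2 - T 0 = 0 by lra.
  by rewrite expr0n /= mul0r mulr0.
set H := X0.2 - t.
have H0 : 0 <= H by rewrite /H subr_ge0.
have E : forall s s', 0 <= s -> s <= s' -> s' <= 1 -> s < 1 ->
    h s' <= h s + H * ((s' - s) / (1 - s)).
  move=> s s' s0 ss' s'1 s1.
  have := interp OX s0 ss' s'1 s1.
  have hs : 0 <= s <= 1 by apply/andP; split; lra.
  have := Tup s hs.
  have l0 : 0 <= (s' - s) / (1 - s) by rewrite divr_ge0 //; lra.
  rewrite /h /H -/(T s) -/(T s').
  set l := (s' - s) / (1 - s) in l0 *.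
  move=> u v; nra.
have claim : forall s, 0 <= s < 1 -> good s.
  move=> s1 hs1; apply: contrapT => ng1.
  pose Bd := [set s | (0 <= s < 1) /\ ~ good s].
  have Bdne : Bd !=set0 by exists s1.
  have Bdlb : has_lbound Bd by exists 0 => s [/andP[]].
  set si := inf Bd.
  have si0 : 0 <= si by apply: lb_le_inf => // s [/andP[]].
  have si1 : si < 1.
    have := ge_inf Bdlb (conj hs1 ng1); case/andP: hs1 => _ u v; lra.
  have before : forall s, 0 <= s -> s < si -> good s.
    move=> s sa sb; apply: contrapT => ng.
    have : 0 <= s < 1 by apply/andP; split; lra.
    move=> hs; have := ge_inf Bdlb (conj hs ng); rewrite -/si; lra.
  set m0 := r ^+ 2 - 4 * a.
  have m0p : 0 < m0 by rewrite /m0; lra.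
  set c := 2 * (3 * a + 1) + 1.
  have cp : 0 < c by rewrite /c; lra.
  set eps := m0 / (2 * c + m0).
  have ep0 : 0 < eps by rewrite /eps divr_gt0 //; lra.
  have ep1 : eps <= 1 by rewrite /eps ler_pdivrMr ?mul1r; lra.
  have epc : eps * c < m0.
    have dp : 0 < 2 * c + m0 by lra.
    rewrite /eps mulrAC ltr_pdivrMr //. nra.
  set del := eps * (1 - si) / (H + 1).
  have H1 : 0 < H + 1 by lra.
  have si1' : 0 < 1 - si by lra.
  have del0 : 0 < del by apply: divr_gt0 => //; exact: mulr_gt0.
  have delE : del * (H + 1) = eps * (1 - si).
    by rewrite /del mulfVK //; exact: lt0r_neq0.
  have [b Bdb hb] := inf_adherent (divr_gt0 del0 (ltr0Sn _ 1)) (conj Bdne Bdlb).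
  rewrite -/si in hb.
  have sib : si <= b := ge_inf Bdlb Bdb.
  case: Bdb => /andP[b0 b1] ngb; apply: ngb.
  set s0 := Num.max 0 (si - del / 2).
  have s00 : 0 <= s0 by rewrite /s0 le_max lexx.
  have s0si : s0 <= si by rewrite /s0 ge_max si0 /=; lra.
  have s0b : si - del / 2 <= s0 by rewrite /s0 le_max lexx orbT.
  have gs0 : good s0.
    have [->|ne] := eqVneq s0 0; first exact: good0.
    apply: before => //.
    have : s0 = si - del / 2.
      by move: ne; rewrite /s0; case: (leP 0 (si - del / 2)) => // _; rewrite eqxx.
    move=> ->; lra.
  have s01 : 0 <= s0 <= 1 by apply/andP; split; lra.
  have hb01 : 0 <= b <= 1 by apply/andP; split; lra.
  have Eb := E s0 b s00 (le_trans s0si sib) (ltW b1) (le_lt_trans s0si si1).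
  have step : H * ((b - s0) / (1 - s0)) <= eps.
    have p1 : 0 < 1 - s0 by lra.
    rewrite mulrA ler_pdivrMr //.
    have : (b - s0) * (H + 1) <= eps * (1 - si) by rewrite -delE; nra.
    nra.
  apply: G => //.
  have hs0 := h0 s0 s01; have hbb := h0 b hb01.
  have g0 : h s0 ^+ 2 <= 3 * a.
    have : s0 ^+ 2 <= 1 by rewrite expr2; nra.
    move: gs0; rewrite /good; nra.
  have hK : h s0 <= 3 * a + 1 by nra.
  have hbs : h b <= h s0 + eps by lra.
  have : h b ^+ 2 <= (h s0 + eps) ^+ 2.
    rewrite ler_pXn2r ?nnegrE //; lra.
  rewrite /m0 /c in epc m0p. nra.
have Hb : H ^+ 2 <= 3 * a.
  rewrite leNgt; apply/negP => Hgt.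
  set nv := (N (x, t)).2 in nuX.
  set C := `|dotn (x - X0.1) (N (x, t)).1| / nv.
  have C0 : 0 <= C by rewrite /C divr_ge0 // ltW.
  have Hp : 0 < H by nra.
  have up : forall s, 0 <= s < 1 -> H <= h s + (1 - s) * C.
    move=> s /andP[s0 s1].
    have hs : 0 <= s <= 1 by apply/andP; split; lra.
    have [OQ _ _] := Tp s hs.
    have := hyp bX OQ; rewrite /=.
    have -> : xs x s - x = (s - 1) *: (x - X0.1).
      by apply/rowP => i; rewrite /xs !mxE; ring.
    rewrite dotnZl => hh.
    have hn := ler_norm (dotn (x - X0.1) (N (x, t)).1).
    have : (T s - t) * nv <= (1 - s) * `|dotn (x - X0.1) (N (x, t)).1|.
      rewrite -/nv in hh. nra.
    rewrite /C mulrA -ler_pdivlMr // => hh2.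
    rewrite /h /H; lra.
  set g := H ^+ 2 - 3 * a.
  have g0 : 0 < g by rewrite /g; lra.
  set c1 := g / (2 * H * C + g).
  have den : 0 < 2 * H * C + g by nra.
  have c10 : 0 < c1 by rewrite /c1 divr_gt0.
  have c11 : c1 <= 1 by rewrite /c1 ler_pdivrMr ?mul1r //; nra.
  have key : 2 * H * (c1 * C) < g.
    have c1E : c1 * (2 * H * C + g) = g.
      by rewrite /c1 divfK //; exact: lt0r_neq0.
    nra.
  have hs : 0 <= 1 - c1 < 1 by apply/andP; split; lra.
  have gd := claim _ hs.
  have hup := up _ hs.
  have e1 : 1 - (1 - c1) = c1 by ring.
  rewrite e1 in hup.
  have hs' : 0 <= 1 - c1 <= 1 by apply/andP; split; lra.
  have hh := h0 (1 - c1) hs'.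
  move: gd; rewrite /good.
  set y := h (1 - c1) in hup hh *.
  have q1 : (1 - c1) ^+ 2 <= 1 by rewrite expr2; nra.
  have q2 : 3 * ((1 - c1) ^+ 2 * a) <= 3 * a by nra.
  have cC0 : 0 <= c1 * C by rewrite mulr_ge0 // ltW.
  rewrite /g in key.
  have q3 : c1 * C < H.
    rewrite ltNge; apply/negP => hc.
    have : 2 * H * H <= 2 * H * (c1 * C) by rewrite ler_pM2l //; lra.
    nra.
  have q4 : (H - c1 * C) ^+ 2 <= y ^+ 2 by rewrite ler_pXn2r ?nnegrE //; lra.
  nra.
have fin : pdot (psub (x, t) X0) (psub (x, t) X0) < r ^+ 2.
  rewrite /pdot /psub /= -/a.
  have -> : (t - X0.2) * (t - X0.2) = H ^+ 2 by rewrite /H; ring.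
  lra.
exact: nu_good bX fin.
Qed.



Lemma diam_ub X Y : O X -> O Y -> pnorm (psub X Y) <= diam O.
Proof.
move=> OX OY; have [K [K0 HK]] := bounded_pdot _ cO.
apply: sup_upper_bound; last by exists X, Y.
split; first by exists (pnorm (psub X Y)), X, Y.
exists (Num.sqrt K); move=> d [U1 [U2 [oU1 oU2 dE]]]; rewrite dE.
exact/ler_wsqrtr/HK.
Qed.

Lemma diam_ge : interior O !=set0 -> r <= diam O.
Proof.
move=> [[z tz] iZ].
have T2 := Th2; have r0' := r0.
have [e e0 He] := interior_up _ _ _ iZ.
have Oz : O (z, tz) by apply: He; rewrite subrr normr0.
have Ob : O (z, tz - e / 2).
  by apply: He; rewrite addrC addKr normrN ger0_norm; lra.
have [K [K0 HK]] := bounded_pdot _ cO.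
set A := [set s | O (z, s)].
have Ane : A !=set0 by exists tz.
have Alb : has_lbound A.
  exists (X0.2 - (K + 1)) => s As.
  have := HK _ _ As (bdryO HX0); rewrite /pdot /psub /=.
  have := dotn_ge0 (z - X0.1); nra.
set B := inf A.
have clB : closure O (z, B).
  exact: (@closure_vert _ _ O z A _ (fun s h => h) (closure_inf _ Ane Alb)).
have OB : O (z, B) by rewrite ((closure_id O).1 (closedO _ cO)).
have lowB : forall s, A s -> B <= s by move=> s As; exact: ge_inf.
have bB : bdry O (z, B).
  split => // /interior_up [e' e'0 He'].
  have hlt : `|B - e' / 2 - B| < e'.
    have -> : B - e' / 2 - B = - (e' / 2) by ring.
    rewrite normrN ger0_norm; lra.
  have := lowB _ (He' _ hlt); lra.
have hh := hyp bB Oz; rewrite /= subrr dotn0l add0r in hh.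
have Bt : B <= tz - e / 2 := lowB _ Ob.
have nu0 : (N (z, B)).2 <= 0 by nra.
have big : r ^+ 2 <= pdot (psub (z, B) X0) (psub (z, B) X0).
  rewrite leNgt; apply/negP => lt.
  have := nu_good bB lt; lra.
apply: le_trans _ (diam_ub _ _ OB (bdryO HX0)).
exact: le_sqrt (ltW r0) big.
Qed.


Lemma main_sec (beta : 'rV[R]_n -> R) :
  interior O !=set0 ->
  (forall x t, bdry_plus O N X0 (x, t) -> t = beta x) ->
  forall x1 x2 : 'rV[R]_n,
    enorm (x1 - X0.1) < r / 4 ->
    proj_plus O N X0 x1 ->
    proj_plus O N X0 x2 ->
    `|beta x1 - beta x2| <= 4 * diam O / r * enorm (x1 - x2).
Proof.
move=> Hint Hbeta x1 x2 hx1 [t1 bp1] [t2 bp2].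
have T2 := Th2; have r0' := r0.
rewrite -(Hbeta _ _ bp1) -(Hbeta _ _ bp2).
case: bp1 => b1 pos1; case: bp2 => b2 pos2.
rewrite NX0 /pdot /e_last /= dotn0r add0r mulr1 in pos1.
rewrite NX0 /pdot /e_last /= dotn0r add0r mulr1 in pos2.
have r4 : 0 < r / 4 by rewrite divr_gt0.
have a1 := sqrt_lt _ _ r4 hx1.
have a10 := dotn_ge0 (x1 - X0.1).
have nu1 : Th < (N (x1, t1)).2 by apply: (stepB _ _ b1 pos1); nra.
have D := diam_ge Hint.
have w0 := dotn_ge0 (x1 - x2).
set w := dotn (x1 - x2) (x1 - x2) in w0.
have eE : enorm (x1 - x2) ^+ 2 = w by rewrite /enorm sqr_sqrtr.
have e0 : 0 <= enorm (x1 - x2) by rewrite /enorm sqrtr_ge0.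
set e := enorm (x1 - x2) in eE e0 *.
set D' := diam O in D *.
case: (ltP e (r / 4)) => he.
- have wl : w < (r / 4) ^+ 2.
    by rewrite -eE ltr_pXn2r ?nnegrE //; lra.
  have a2 : 4 * dotn (x2 - X0.1) (x2 - X0.1) < r ^+ 2.
    have -> : x2 - X0.1 = (x2 - x1) + (x1 - X0.1).
      by rewrite addrA subrK.
    have := dotn_par (x2 - x1) (x1 - X0.1).
    have -> : x2 - x1 = - (x1 - x2) by rewrite opprB.
    rewrite dotnNN -/w. nra.
  have nu2 : Th < (N (x2, t2)).2 by exact: (stepB _ _ b2 pos2 a2).
  have sq : (t1 - t2) ^+ 2 <= 3 * w.
    case: (leP t1 t2) => ht.
    + have := slope b1 nu1 (bdryO b2) ht; rewrite /=.
      have -> : x2 - x1 = - (x1 - x2) by rewrite opprB.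
      by rewrite dotnNN -/w -sqrrN opprB.
    + by have := slope b2 nu2 (bdryO b1) (ltW ht).
  have ab : `|t1 - t2| <= 2 * e.
    rewrite -(ler_pXn2r (n := 2)) ?nnegrE //; last by rewrite mulr_ge0.
    by rewrite real_normK ?num_real // exprMn eE; lra.
  apply: le_trans ab _.
  have k : 2 <= 4 * D' / r by rewrite ler_pdivlMr //; nra.
  move: k; set K' := 4 * D' / r => k; nra.
- have p := diam_ub _ _ (bdryO b1) (bdryO b2).
  have q : `|t1 - t2| <= pnorm (psub (x1, t1) (x2, t2)).
    rewrite /pnorm /pdot /= -/w; apply: le_sqrt => //.
    by rewrite real_normK ?num_real // expr2; lra.
  have D0 : 0 <= D' by lra.
  have k : 1 <= 4 * e / r by rewrite ler_pdivlMr // mul1r; lra.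
  have -> : 4 * D' / r * e = D' * (4 * e / r).
    by field; exact: lt0r_neq0.
  apply: le_trans q _; apply: le_trans p _.
  exact: ler_peMr.
Qed.



End Geo.

Theorem lemma2p10 (R : realType) (n : nat) (O : set ('rV[R]_n * R)%type)
  (N : ('rV[R]_n * R)%type -> ('rV[R]_n * R)%type) (Theta rT : R)
  (X0 : ('rV[R]_n * R)%type) (beta : 'rV[R]_n -> R) :
  convex_body O ->
  C1_normal_field O N ->
  1 / 2 <= Theta < 1 ->
  0 < rT ->
  omega O N rT < Num.sqrt (2 - 2 * Theta) ->
  bdry O X0 ->
  N X0 = e_last R n ->
  (* dOmega^+(X0) is the graph of beta over Omega_{X0} *)
  (forall x t, bdry_plus O N X0 (x, t) -> t = beta x) ->
  forall x1 x2 : 'rV[R]_n,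
    enorm (x1 - X0.1) < rT / 4 ->
    proj_plus O N X0 x1 ->
    proj_plus O N X0 x2 ->
    `|beta x1 - beta x2| <= 4 * diam O / rT * enorm (x1 - x2).
Proof.
move=> [cO convO Hint] [nf1 _ _] /andP[Th2 Th1] r0 Hom HX0 NX0 Hbeta.
exact: (@main_sec R n O N Theta rT X0 cO convO nf1 Th2 Th1 r0 Hom HX0 NX0 beta Hint Hbeta).
Qed.
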